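(* Let $\mathcal H$ be a $d$-dimensional Hilbert space with orthonormal basis $\lvert1\rangle,\dots,\lvert d\rangle$, set $\widetilde E_{d(n-1)+m}=\lvert n\rangle\langle m\rvert$ for $n,m\in\{1,\dots,d\}$, and let $\mathcal E:\mathcal L(\mathcal H)\to\mathcal L(\mathcal H)$ be a quantum channel with $\mathcal E(\rho)=\sum_{i,j}\widetilde E_i\rho\widetilde E_j^\dagger\chi_{ij}$. Let $\mathcal H^\dagger$ be a Hilbert space with orthonormal basis $\{\lvert j\rangle:j\in\{1,\dots,d^2\}\}$, and define $\chi=\sum_{j,k}\chi_{jk}\lvert j\rangle\langle k\rvert$ and, for $\rho\in\mathcal L(\mathcal H)$, $\widetilde\rho=\sum_{j,k}\operatorname{tr}(\widetilde E_j\rho\widetilde E_k^\dagger)\lvert j\rangle\langle k\rvert$. Then, up to a unitary transformation on $\mathcal H^\dagger$, the complementary channel $\mathcal E^\dagger:\mathcal L(\mathcal H)\to\mathcal L(\mathcal H^\dagger)$ is given by $$\mathcal E^\dagger(\rho)=\sqrt{\chi}^{\,*}\,\widetilde\rho\,\sqrt{\chi}^{\,*}.$$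
   Context: The complementary channel of $\mathcal E$ is $\rho\mapsto\operatorname{tr}_B(U\rho U^\dagger)$ where $U$ is an isometric extension of $\mathcal E$ (output space $B$, environment $\mathcal H^\dagger$); it is defined up to a unitary on the environment. $\sqrt\chi$ is the positive semidefinite square root of the (positive semidefinite) matrix $\chi$, and $^*$ denotes entrywise complex conjugation in the basis $\{\lvert j\rangle\}$. *)

(* Defs.v *)
From HB Require Import structures.
From mathcomp Require Import all_boot all_order all_algebra.
From Stdlib Require Import ClassicalEpsilon.
Set Implicit Arguments. Unset Strict Implicit. Unset Printing Implicit Defensive.
Import Order.TTheory GRing.Theory Num.Theory.
Local Open Scope ring_scope.

Section Defs.
Variable C : numClosedFieldType.

Definition adj m n (A : 'M[C]_(m, n)) : 'M[C]_(n, m) := (map_mx Num.conj A)^T.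

(* entrywise complex conjugation  A^*  *)
Definition cconj m n (A : 'M[C]_(m, n)) : 'M[C]_(m, n) := map_mx Num.conj A.

Definition psdmx n (A : 'M[C]_n) : Prop :=
  adj A = A /\ forall x : 'cV[C]_n, 0 <= (adj x *m A *m x) 0 0.

(* the positive semidefinite square root (unique when A is psd) *)
Definition sqrtmx n (A : 'M[C]_n) : 'M[C]_n :=
  epsilon (inhabits 0) (fun S => psdmx S /\ S *m S = A).

Definition isometry m n (U : 'M[C]_(m, n)) : Prop := adj U *m U = 1%:M.
Definition unitary n (V : 'M[C]_n) : Prop := adj V *m V = 1%:M /\ V *m adj V = 1%:M.

(* Tensor product index convention: |b> (x) |e>  <->  mxvec_index b e *)
Definition ptrace2 m n (M : 'M[C]_(m * n)) : 'M[C]_m :=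
  \matrix_(i, j) \sum_(e < n) M (mxvec_index i e) (mxvec_index j e).
Definition ptrace1 m n (M : 'M[C]_(m * n)) : 'M[C]_n :=
  \matrix_(k, l) \sum_(b < m) M (mxvec_index b k) (mxvec_index b l).

(* Etilde_{d n + m} = |n><m|  (0-based indices n, m < d) *)
Definition Etil d (k : 'I_(d * d)) : 'M[C]_d :=
  \matrix_(i, j) ((i * d + j)%N == k :> nat)%:R.

Definition chi_channel d (chi : 'M[C]_(d * d)) (rho : 'M[C]_d) : 'M[C]_d :=
  \sum_(i < d * d) \sum_(j < d * d) chi i j *: (Etil i *m rho *m adj (Etil j)).

Definition rho_tilde d (rho : 'M[C]_d) : 'M[C]_(d * d) :=
  \matrix_(j, k) \tr (Etil j *m rho *m adj (Etil k)).

Definition isometric_extension d e (Ech : 'M[C]_d -> 'M[C]_d)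
  (U : 'M[C]_(d * e, d)) : Prop :=
  isometry U /\ forall rho, ptrace2 (U *m rho *m adj U) = Ech rho.

Definition complementary d e (U : 'M[C]_(d * e, d)) (rho : 'M[C]_d) : 'M[C]_e :=
  ptrace1 (U *m rho *m adj U).

End Defs.

(* Main.v *)
Set Warnings "-notation-overridden,-ambiguous-paths".
Require Import Defs.
From mathcomp Require Import all_boot all_order all_algebra.
From Stdlib Require Import ClassicalEpsilon.
Import GRing.Theory Num.Theory.
Local Open Scope ring_scope.

Section Aux.
Set Implicit Arguments. Unset Strict Implicit. Unset Printing Implicit Defensive.
Variable C : numClosedFieldType.
Local Open Scope sesquilinear_scope.

Lemma adjE m n (A : 'M[C]_(m, n)) : adj A = map_mx Num.conj (A^T).
Proof. by rewrite /adj map_trmx. Qed.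

Lemma adj_entry m n (A : 'M[C]_(m, n)) i j : adj A i j = (A j i)^*.
Proof. by rewrite !mxE. Qed.

Lemma adjM m n p (A : 'M[C]_(m, n)) (B : 'M[C]_(n, p)) :
  adj (A *m B) = adj B *m adj A.
Proof. by rewrite !adjE trmx_mul map_mxM. Qed.

Lemma adjK m n (A : 'M[C]_(m, n)) : adj (adj A) = A.
Proof. by apply/matrixP => i j; rewrite !mxE conjCK. Qed.

Lemma adj_sum m n I (r : seq I) (P : pred I) (F : I -> 'M[C]_(m, n)) :
  adj (\sum_(i <- r | P i) F i) = \sum_(i <- r | P i) adj (F i).
Proof.
apply/matrixP => i j; rewrite !mxE !summxE rmorph_sum.
by apply: eq_bigr => k _; rewrite !mxE.
Qed.

Lemma adjZ m n a (A : 'M[C]_(m, n)) : adj (a *: A) = a^* *: adj A.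
Proof. by apply/matrixP => i j; rewrite !mxE rmorphM. Qed.

Lemma sum_mxvec m n (F : 'I_(m * n) -> C) :
  \sum_r F r = \sum_i \sum_j F (mxvec_index i j).
Proof.
rewrite pair_big /= (reindex (uncurry (@mxvec_index m n))) /=.
  by apply: eq_bigr => -[i j].
exact: curry_mxvec_bij.
Qed.


Definition Kr d e (U : 'M[C]_(d * e, d)) (k : 'I_e) : 'M[C]_d :=
  \matrix_(b, c) U (mxvec_index b k) c.

Definition stack d e (F : 'I_e -> 'M[C]_d) : 'M[C]_(d * e, d) :=
  \matrix_(r, c) mxvec (\matrix_(b, k) F k b c) 0 r.

Lemma Kr_stack d e (F : 'I_e -> 'M[C]_d) k : Kr (stack F) k = F k.
Proof. by apply/matrixP => b c; rewrite !mxE mxvecE mxE. Qed.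

Lemma ptrace2_Kr d e (U : 'M[C]_(d * e, d)) rho :
  ptrace2 (U *m rho *m adj U) = \sum_k Kr U k *m rho *m adj (Kr U k).
Proof.
apply/matrixP => i j; rewrite !mxE summxE; apply: eq_bigr => k _.
rewrite !mxE; apply: eq_bigr => c _; rewrite !mxE; congr (_ * _).
by apply: eq_bigr => c' _; rewrite !mxE.
Qed.

Lemma comp_Kr d e (U : 'M[C]_(d * e, d)) rho :
  complementary U rho = \matrix_(k, l) \tr (Kr U k *m rho *m adj (Kr U l)).
Proof.
apply/matrixP => k l; rewrite !mxE; apply: eq_bigr => b _.
rewrite !mxE; apply: eq_bigr => c _; rewrite !mxE; congr (_ * _).
by apply: eq_bigr => c' _; rewrite !mxE.
Qed.

Lemma isoE d e (U : 'M[C]_(d * e, d)) :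
  adj U *m U = \sum_k adj (Kr U k) *m Kr U k.
Proof.
apply/matrixP => i j; rewrite !mxE summxE sum_mxvec exchange_big.
apply: eq_bigr => k _; rewrite !mxE; apply: eq_bigr => b _; rewrite !mxE.
by [].
Qed.

Definition comb n d (G : 'M[C]_n) (A : 'I_n -> 'M[C]_d) (k : 'I_n) : 'M[C]_d :=
  \sum_l G l k *: A l.

Lemma combM n d (G : 'M[C]_n) (A : 'I_n -> 'M[C]_d) rho k k' :
  comb G A k *m rho *m adj (comb G A k') =
  \sum_l \sum_l' (G l k * (G l' k')^*) *: (A l *m rho *m adj (A l')).
Proof.
rewrite /comb adj_sum !mulmx_suml; apply: eq_bigr => l _.
rewrite mulmx_sumr; apply: eq_bigr => l' _.
by rewrite adjZ -!scalemxAl -scalemxAr scalerA.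
Qed.

Lemma combM' n d (G : 'M[C]_n) (A : 'I_n -> 'M[C]_d) k k' :
  adj (comb G A k) *m comb G A k' =
  \sum_l \sum_l' ((G l k)^* * G l' k') *: (adj (A l) *m A l').
Proof.
rewrite /comb adj_sum mulmx_suml; apply: eq_bigr => l _.
rewrite mulmx_sumr; apply: eq_bigr => l' _.
by rewrite adjZ -!scalemxAl -scalemxAr scalerA.
Qed.

Lemma comb_sum n d (G : 'M[C]_n) (A : 'I_n -> 'M[C]_d) rho :
  \sum_k comb G A k *m rho *m adj (comb G A k) =
  \sum_l \sum_l' (G *m adj G) l l' *: (A l *m rho *m adj (A l')).
Proof.
under eq_bigr do rewrite combM.
rewrite exchange_big; apply: eq_bigr => l _.
rewrite exchange_big; apply: eq_bigr => l' _.
by rewrite -scaler_suml !mxE; congr (_ *: _); apply: eq_bigr => k _; rewrite !mxE.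
Qed.

Lemma comb_sum' n d (G : 'M[C]_n) (A : 'I_n -> 'M[C]_d) :
  \sum_k adj (comb G A k) *m comb G A k =
  \sum_l \sum_l' (G *m adj G) l' l *: (adj (A l) *m A l').
Proof.
under eq_bigr do rewrite combM'.
rewrite exchange_big; apply: eq_bigr => l _.
rewrite exchange_big; apply: eq_bigr => l' _.
rewrite -scaler_suml !mxE; congr (_ *: _); apply: eq_bigr => k _.
by rewrite !mxE mulrC.
Qed.

Lemma tr_sum d I (r : seq I) (P : pred I) (F : I -> 'M[C]_d) :
  \tr (\sum_(i <- r | P i) F i) = \sum_(i <- r | P i) \tr (F i).
Proof. by elim/big_rec2: _ => [|i x y _ <-]; rewrite ?mxtrace0 ?mxtraceD. Qed.

Lemma comb_comp n d (G : 'M[C]_n) (A : 'I_n -> 'M[C]_d) rho :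
  \matrix_(k, k') \tr (comb G A k *m rho *m adj (comb G A k')) =
  G^T *m (\matrix_(l, l') \tr (A l *m rho *m adj (A l'))) *m cconj G.
Proof.
apply/matrixP => k k'; rewrite [LHS]mxE combM tr_sum.
under eq_bigr do rewrite tr_sum.
rewrite mxE exchange_big; apply: eq_bigr => l' _; rewrite mxE mulr_suml.
apply: eq_bigr => l _; rewrite !mxE mxtraceZ.
by rewrite -!mulrA [_ * (G l' k')^*]mulrC.
Qed.


Lemma tr_delta d (X : 'M[C]_d) i j : \tr (X *m delta_mx j i) = X i j.
Proof.
rewrite /mxtrace (bigD1 i) //= big1 ?addr0.
  rewrite mxE (bigD1 j) //= big1 ?addr0; first by rewrite mxE !eqxx mulr1.
  by move=> l /negbTE nlj; rewrite mxE nlj mulr0.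
move=> k /negbTE nki; rewrite mxE big1 // => l _.
by rewrite mxE nki andbF mulr0.
Qed.

Lemma mx_tr_eq d (X Y : 'M[C]_d) :
  (forall rho, \tr (X *m rho) = \tr (Y *m rho)) -> X = Y.
Proof.
by move=> H; apply/matrixP => i j; rewrite -!tr_delta H.
Qed.

Lemma stack_comp d e (F : 'I_e -> 'M[C]_d) rho :
  complementary (stack F) rho = \matrix_(k, l) \tr (F k *m rho *m adj (F l)).
Proof. by rewrite comp_Kr; apply/matrixP => k l; rewrite !mxE !Kr_stack. Qed.

Lemma stack_ptrace2 d e (F : 'I_e -> 'M[C]_d) rho :
  ptrace2 (stack F *m rho *m adj (stack F)) =
  \sum_k F k *m rho *m adj (F k).
Proof. by rewrite ptrace2_Kr; apply: eq_bigr => k _; rewrite Kr_stack. Qed.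

Lemma stack_iso d e (F : 'I_e -> 'M[C]_d) :
  adj (stack F) *m stack F = \sum_k adj (F k) *m F k.
Proof. by rewrite isoE; apply: eq_bigr => k _; rewrite Kr_stack. Qed.

Lemma TP_one d (chi : 'M[C]_(d * d)) :
  (forall rho, \tr (chi_channel chi rho) = \tr rho) ->
  \sum_l \sum_l' chi l' l *: (adj (Etil C l) *m Etil C l') = 1%:M.
Proof.
move=> TP; apply: mx_tr_eq => rho; rewrite mul1mx -[RHS]TP /chi_channel.
rewrite mulmx_suml tr_sum tr_sum.
under eq_bigr do rewrite mulmx_suml tr_sum.
rewrite exchange_big; apply: eq_bigr => i _.
rewrite tr_sum; apply: eq_bigr => j _.
by rewrite -scalemxAl !mxtraceZ [in RHS]mxtrace_mulC !mulmxA.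
Qed.

Lemma part1 d (chi S : 'M[C]_(d * d)) (Ech : 'M[C]_d -> 'M[C]_d) :
  adj S = S -> S *m S = chi ->
  (forall rho, Ech rho = chi_channel chi rho) ->
  (forall rho, \tr (Ech rho) = \tr rho) ->
  let U0 := stack (comb S (@Etil C d)) in
  isometric_extension Ech U0 /\
  forall rho, complementary U0 rho = cconj S *m rho_tilde rho *m cconj S.
Proof.
move=> hS SS Edef TP U0; rewrite /U0; split; first split.
- rewrite /Defs.isometry stack_iso comb_sum' hS SS; apply: TP_one => rho.
  by rewrite -Edef TP.
- move=> rho; rewrite stack_ptrace2 comb_sum hS SS Edef.
  by [].
- move=> rho; rewrite stack_comp comb_comp.
  have -> : S^T = cconj S by rewrite -{1}hS /adj trmxK.
  by [].
Qed.

Local Notation "B ^!" :=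
  (orthomx Num.conj (mx_of_hermitian (hermitian1mx _)) B) : matrix_set_scope.
Local Notation "A '_|_ B" := (A%MS <= B^!)%MS : bool_scope.

Lemma AAt0 p q (A : 'M[C]_(p, q)) : A *m A^t* = 0 -> A = 0.
Proof.
move=> h; apply/matrixP => i j; rewrite mxE.
have /matrixP /(_ i i) := h; rewrite !mxE => hs.
have := @psumr_eq0P _ _ _ _ _ hs.
have H : forall k : 'I_q, true -> 0 <= A i k * (A^t*) k i.
  by move=> k _; rewrite !mxE mul_conjC_ge0.
move=> /(_ H j isT); rewrite !mxE => /eqP; rewrite mulf_eq0 conjC_eq0 orbb.
by move=> /eqP.
Qed.

Lemma mulmx_tC p q s (A : 'M[C]_(p, q)) (B : 'M[C]_(q, s)) :
  A *m B *m (A *m B)^t* = A *m (B *m B^t*) *m A^t*.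
Proof. by rewrite trmx_mul map_mxM !mulmxA. Qed.

Lemma trick m k (P Q : 'M[C]_m) (M : 'M[C]_(k, m)) :
  P *m P^t* = Q *m Q^t* -> M *m P = 0 -> M *m Q = 0.
Proof.
move=> PQ MP; apply: AAt0; rewrite mulmx_tC -PQ -mulmx_tC MP.
by rewrite mul0mx.
Qed.

Lemma helper r k k' m (A B : 'M[C]_(r, m)) (A' : 'M_(k, m)) (B' : 'M_(k', m)) :
  k = k' -> (r + k)%N = m -> col_mx A A' \is unitarymx ->
  col_mx B B' \is unitarymx ->
  exists W : 'M[C]_m, [/\ W *m W^t* = 1%:M, W^t* *m W = 1%:M &
    forall p (X : 'M[C]_(p, m)), X *m A'^t* = 0 -> X *m W = X *m A^t* *m B].
Proof.
move=> ekk em; subst k' m => uA uB.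
exists ((col_mx A A')^t* *m col_mx B B').
have uW : (col_mx A A')^t* *m col_mx B B' \is unitarymx.
  by rewrite mul_unitarymx // trmxC_unitary.
split; first exact/unitarymxP.
  by rewrite -trmxC_unitary in uW; have /unitarymxP := uW; rewrite trmxCK.
move=> p X XA; rewrite tr_col_mx map_row_mx mul_row_col mulmxDr !mulmxA XA.
by rewrite mul0mx addr0.
Qed.

Lemma UF m (P Q : 'M[C]_m) : P *m P^t* = Q *m Q^t* ->
  exists W : 'M[C]_m, [/\ W *m W^t* = 1%:M, W^t* *m W = 1%:M & Q = P *m W].
Proof.
move=> PQ.
pose Sp := schmidt (row_base P).
pose Sp' := schmidt (row_base P^!%MS).
have SpP : (Sp :=: P)%MS.
  exact: eqmx_trans (eqmx_schmidt_free (row_base_free P)) (eq_row_base P).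
have Sp'P : (Sp' :=: P^!)%MS.
  exact: eqmx_trans (eqmx_schmidt_free (row_base_free _)) (eq_row_base _).
have uSp : Sp \is unitarymx by apply: schmidt_unitarymx; exact: rank_leq_col.
have [Xp hXp] : exists Xp, Xp *m P = Sp.
  by exists (Sp *m pinvmx P); apply: mulmxKpV; rewrite SpP.
pose T := Xp *m Q.
have TT : T *m T^t* = 1%:M.
  by rewrite mulmx_tC -PQ -mulmx_tC hXp; apply/unitarymxP.
have uT : T \is unitarymx by apply/unitarymxP.
pose Tc := schmidt (row_base T^!%MS).
have TcT : (Tc :=: T^!)%MS.
  exact: eqmx_trans (eqmx_schmidt_free (row_base_free _)) (eq_row_base _).
have uCq : col_mx T Tc \is unitarymx.
  apply/unitarymxP; rewrite tr_col_mx map_row_mx mul_col_row TT.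
  rewrite (unitarymxP (schmidt_unitarymx _ (rank_leq_col _))).
  rewrite !(orthomx1P _) -?scalar_mx_block //.
    by rewrite TcT.
  by rewrite orthomx_sym TcT.
have ek : \rank P^!%MS = \rank T^!%MS.
  by rewrite !rank_ortho (mxrank_unitary uT).
have [W [WW WtW HW]] := helper ek (add_rank_ortho P) (schmidt_complete_unitarymx P) uCq.
exists W; split => //.
have PSp' : P *m Sp'^t* = 0.
  by apply/orthomx1P; rewrite orthomx_sym Sp'P.
rewrite (HW _ _ PSp') /T !mulmxA.
have PSS : P *m Sp^t* *m Sp = P.
  have PS : (P <= Sp)%MS by rewrite SpP.
  have [Y PY] : exists Y, Y *m Sp = P by exists (P *m pinvmx Sp); apply: mulmxKpV.
  transitivity (Y *m Sp *m Sp^t* *m Sp); first by rewrite PY.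
  by rewrite -!mulmxA (mulmxA Sp) (unitarymxP uSp) mul1mx.
have : (P *m Sp^t* *m Xp - 1%:M) *m P = 0.
  by rewrite mulmxBl mul1mx -(mulmxA _ Xp P) hXp PSS subrr.
move=> /(trick PQ); rewrite mulmxBl mul1mx => /eqP; rewrite subr_eq0 => /eqP.
by [].
Qed.


Lemma diag_quad n (D : 'rV[C]_n) (y : 'cV[C]_n) :
  (y^t* *m diag_mx D *m y) 0 0 = \sum_j (y j 0)^* * D 0 j * y j 0.
Proof.
rewrite mxE; apply: eq_bigr => j _; rewrite mul_mx_diag !mxE.
by [].
Qed.

Lemma psd_sqrt n (A : 'M[C]_n) : psdmx A -> exists S, psdmx S /\ S *m S = A.
Proof.
move=> [hA pA].
have hA' : A^t* = A by rewrite -[RHS]hA /adj map_trmx.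
have nA : A \is normalmx by apply/normalmxP; rewrite hA'.
have AE := orthomx_spectralP nA.
set P := spectralmx A in AE; set D := spectral_diag A in AE.
have uP : P \is unitarymx := spectral_unitarymx A.
rewrite (invmx_unitary uP) in AE.
have PPt : P *m P^t* = 1%:M by apply/unitarymxP.
have PtP : P^t* *m P = 1%:M.
  by have := uP; rewrite -trmxC_unitary => /unitarymxP; rewrite trmxCK.
have Dge0 : forall i, 0 <= D 0 i.
  move=> i; have := pA (P^t* *m delta_mx i 0).
  have -> : adj (P^t* *m delta_mx i 0) = (delta_mx i 0 : 'cV[C]_n)^t* *m P.
    by rewrite /adj map_trmx trmx_mul map_mxM trmxCK.
  rewrite AE !mulmxA -(mulmxA _ P (P^t*)) PPt mulmx1.
  rewrite -(mulmxA _ P (P^t*)) PPt mulmx1.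
  rewrite diag_quad (bigD1 i) //= big1 ?addr0.
    by rewrite !mxE eqxx mulr1 conjC1 mul1r.
  by move=> j /negbTE nji; rewrite !mxE nji mulr0.
pose sD := \row_i sqrtC (D 0 i).
exists (P^t* *m diag_mx sD *m P); split; first split.
- rewrite /adj map_trmx !trmx_mul !map_mxM trmxCK !mulmxA.
  congr (_ *m _ *m _); rewrite tr_diag_mx map_diag_mx; congr diag_mx.
  by apply/rowP => i; rewrite !mxE; apply: geC0_conj; rewrite sqrtC_ge0.
- move=> x; rewrite /adj map_trmx.
  have -> : x^t* *m (P^t* *m diag_mx sD *m P) *m x =
            (P *m x)^t* *m diag_mx sD *m (P *m x).
    by rewrite trmx_mul map_mxM !mulmxA.
  rewrite diag_quad sumr_ge0 // => j _.
  rewrite mulrC mulrA mulr_ge0 ?mxE ?sqrtC_ge0 //.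
  exact: mul_conjC_ge0.
- rewrite !mulmxA -(mulmxA _ P (P^t*)) PPt mulmx1 AE; congr (_ *m _).
  rewrite -mulmxA; congr (_ *m _).
  rewrite mul_diag_mx; apply/matrixP => i j; rewrite !mxE.
  case: eqP => [->|_]; last by rewrite !mulr0n mulr0.
  by rewrite !mulr1n -expr2 sqrtCK.
Qed.


Lemma quad_delta d (X : 'M[C]_d) i j i' j' :
  (X *m delta_mx j j' *m adj X) i i' = X i j * (X i' j')^*.
Proof.
rewrite mxE (bigD1 j') //= big1 ?addr0.
  rewrite !mxE (bigD1 j) //= big1 ?addr0; first by rewrite !mxE !eqxx mulr1.
  by move=> l /negbTE nl; rewrite mxE nl mulr0.
move=> c /negbTE nc; rewrite mxE big1 ?mul0r // => l _.
by rewrite mxE nc andbF mulr0.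
Qed.

Definition vecs n d (A : 'I_n -> 'M[C]_d) : 'M[C]_(d * d, n) :=
  \matrix_(r, l) mxvec (A l) 0 r.

Lemma vecs_eq n d (A B : 'I_n -> 'M[C]_d) :
  (forall rho, \sum_l A l *m rho *m adj (A l) = \sum_l B l *m rho *m adj (B l)) ->
  vecs A *m (vecs A)^t* = vecs B *m (vecs B)^t*.
Proof.
move=> H; apply/matrixP => r r'.
case/mxvec_indexP: r => i j; case/mxvec_indexP: r' => i' j'.
have /matrixP /(_ i i') := H (delta_mx j j'); rewrite !summxE.
under eq_bigr do rewrite quad_delta.
under [in RHS]eq_bigr do rewrite quad_delta.
move=> E; rewrite !mxE; rewrite (eq_bigr (fun l => A l i j * (A l i' j')^* )).
  rewrite E; apply: eq_bigr => l _; rewrite !mxE !mxvecE //.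
by move=> l _; rewrite !mxE !mxvecE.
Qed.


Lemma part2 d (U0 U : 'M[C]_(d * (d * d), d)) :
  (forall rho, ptrace2 (U0 *m rho *m adj U0) = ptrace2 (U *m rho *m adj U)) ->
  exists V : 'M[C]_(d * d), unitary V /\
    forall rho, complementary U rho = V *m complementary U0 rho *m adj V.
Proof.
move=> HU.
have H : forall rho, \sum_l Kr U0 l *m rho *m adj (Kr U0 l) =
                     \sum_l Kr U l *m rho *m adj (Kr U l).
  by move=> rho; rewrite -!ptrace2_Kr.
have [W [WW WtW hW]] := UF (vecs_eq H).
have KB : forall k, Kr U k = comb W (Kr U0) k.
  move=> k; apply/matrixP => i j.
  have /matrixP /(_ (mxvec_index i j) k) := hW.
  rewrite [in LHS]mxE mxvecE => ->; rewrite mxE summxE; apply: eq_bigr => l _.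
  by rewrite !mxE mxvecE mulrC mxE.
have adjWT : adj (W^T) = (W^t*)^T by [].
exists W^T; split; first split.
- by rewrite adjWT -trmx_mul WW trmx1.
- by rewrite adjWT -trmx_mul WtW trmx1.
move=> rho; rewrite !comp_Kr.
have -> : \matrix_(k, l) \tr (Kr U k *m rho *m adj (Kr U l)) =
          \matrix_(k, l) \tr (comb W (Kr U0) k *m rho *m adj (comb W (Kr U0) l)).
  by apply/matrixP => k l; rewrite !mxE !KB.
rewrite comb_comp; congr (_ *m _).
by rewrite /adj /cconj map_trmx trmxK.
Qed.

End Aux.

Theorem lemma20 (C : numClosedFieldType) (d : nat) (chi : 'M[C]_(d * d))
  (Ech : 'M[C]_d -> 'M[C]_d)
  (chi_psd : psdmx chi)
  (Ech_def : forall rho, Ech rho = chi_channel chi rho)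
  (Ech_TP : forall rho, \tr (Ech rho) = \tr rho) :
  (exists U : 'M[C]_(d * (d * d), d),
      isometric_extension Ech U /\
      forall rho, complementary U rho =
        cconj (sqrtmx chi) *m rho_tilde rho *m cconj (sqrtmx chi)) /\
  (forall U : 'M[C]_(d * (d * d), d), isometric_extension Ech U ->
      exists V : 'M[C]_(d * d), unitary V /\
      forall rho, complementary U rho =
        V *m (cconj (sqrtmx chi) *m rho_tilde rho *m cconj (sqrtmx chi)) *m adj V).
Proof.
have [S [psdS SS]] := psd_sqrt chi_psd.
have [[hR _] RR] : psdmx (sqrtmx chi) /\ sqrtmx chi *m sqrtmx chi = chi.
  exact: (epsilon_spec (inhabits 0) (fun S => psdmx S /\ S *m S = chi)
    (ex_intro _ S (conj psdS SS))).
have [iso0 comp0] := part1 hR RR Ech_def Ech_TP.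
split; first by eexists; split; [exact: iso0 | exact: comp0].
move=> U [isoU trU].
have [V [uV hV]] := part2 (U0 := stack (comb (sqrtmx chi) (@Etil C d))) (U := U)
  (fun rho => etrans (proj2 iso0 rho) (esym (trU rho))).
by exists V; split => // rho; rewrite hV comp0.
Qed.
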